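(* Every $L$-selective $T_1$-space is an $\alpha_1$-space.
   Context: For spaces $Y$, $X$, a map $\varphi:Y\to\mathcal P(X)\setminus\{\emptyset\}$ is lower semicontinuous (l.s.c.) if $\{y:\varphi(y)\cap U\neq\emptyset\}$ is open in $Y$ for every open $U\subseteq X$; a selection is a map $f:Y\to X$ with $f(y)\in\varphi(y)$ for all $y$. $X$ is $Y$-selective if every l.s.c. map from $Y$ to the family of nonempty closed subsets of $X$ has a continuous selection. $X$ is $L$-selective if it is $(\omega+1)$-selective, where $\omega+1$ carries the order topology (a convergent sequence with its limit). A space $X$ is an $\alpha_1$-space if for every $x\in X$ and every countable family $\{A_n\}_{n\in\omega}$ of sequences converging to $x$ there is a sequence $A$ converging to $x$ such that $A_n\setminus A$ is finite for every $n$. *)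

(* Defs.v *)
From HB Require Import structures.
From mathcomp Require Import all_boot all_order.
From mathcomp Require Import all_classical all_reals all_analysis.
Set Implicit Arguments. Unset Strict Implicit. Unset Printing Implicit Defensive.
Local Open Scope classical_set_scope.

Definition lsc_closed_map (Y : Type) (openY : set (set Y))
  (X : topologicalType) (phi : Y -> set X) : Prop :=
  (forall y, phi y !=set0 /\ closed (phi y)) /\
  (forall U : set X, open U -> openY [set y | phi y `&` U !=set0]).

Definition cont_from (Y : Type) (openY : set (set Y))
  (X : topologicalType) (f : Y -> X) : Prop :=
  forall U : set X, open U -> openY (f @^-1` U).

Definition selective (Y : Type) (openY : set (set Y)) (X : topologicalType) : Prop :=
  forall phi : Y -> set X, lsc_closed_map openY phi ->
    exists f : Y -> X, cont_from openY f /\ forall y, phi y (f y).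

(* omega+1 represented as option nat, None = omega; the order topology:
   every finite ordinal is isolated, and basic neighbourhoods of omega are
   the tails (m, omega]. *)
Definition omega1_open : set (set (option nat)) :=
  [set U | U None -> exists m : nat, forall n : nat, (m <= n)%N -> U (Some n)].

Definition L_selective (X : topologicalType) : Prop :=
  selective omega1_open X.

(* alpha_1: sequences are maps nat -> X, viewed as sets through their range *)
Definition alpha1_space (X : topologicalType) : Prop :=
  forall (x : X) (A : nat -> nat -> X),
    (forall n, A n @ \oo --> x) ->
    exists B : nat -> X, B @ \oo --> x /\
      forall n, finite_set (range (A n) `\` range B).

(* Main.v *)
Require Import Defs.
From mathcomp Require Import all_boot all_order.
From mathcomp Require Import all_classical all_reals all_analysis.
From mathcomp Require Import zify.
From Stdlib Require Cantor.
Local Open Scope classical_set_scope.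

Lemma ev_open (X : topologicalType) (u : nat -> X) x : u @ \oo --> x ->
  forall U, open U -> U x -> exists M, forall m, (M <= m)%N -> U (u m).
Proof.
move=> hu U oU Ux; have [M _ HM] := hu U (open_nbhs_nbhs (conj oU Ux)).
by exists M => m Mm; exact: HM.
Qed.
Arguments ev_open {X u x}.

Lemma cvg_from_open (X : topologicalType) (u : nat -> X) x :
  (forall U, open U -> U x -> exists M, forall m, (M <= m)%N -> U (u m)) ->
  u @ \oo --> x.
Proof.
move=> H V; rewrite nbhsE => -[U [oU Ux] UV]; have [M HM] := H U oU Ux.
by exists M => // m /HM /UV.
Qed.

Lemma boundf (g : nat -> nat) M0 : exists G, forall N, (N < M0)%N -> (g N <= G)%N.
Proof.
elim: M0 => [|M [G HG]]; first by exists 0.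
exists (maxn G (g M)) => N; rewrite ltnS leq_eqVlt => /orP[/eqP->|/HG h].
  exact: leq_maxr.
exact: leq_trans h (leq_maxl _ _).
Qed.

Lemma to_nat_bound N j M0 G : (N < M0)%N -> (j < G)%N ->
  (Cantor.to_nat (N, j) < G + (G + M0) * (G + M0))%N.
Proof. move=> h1 h2; have := Cantor.to_nat_spec N j. nia. Qed.

Lemma to_nat_ge N j : (j <= Cantor.to_nat (N, j))%N.
Proof. have := Cantor.to_nat_non_decreasing N j. lia. Qed.

Lemma fin_head (X : Type) (a : nat -> X) (P : set X) K :
  (forall j, (K <= j)%N -> P (a j)) -> finite_set (range a `\` P).
Proof.
move=> H; apply: (@sub_finite_set _ _ (a @` `I_K)); last first.
  exact/finite_image/finite_II.
move=> _ [[j _ <-] Pn]; exists j => //=; rewrite ltnNge; apply/negP => /H.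
exact: Pn.
Qed.

Theorem mainTheorem3 (X : topologicalType) :
  @accessible_space X -> L_selective X -> alpha1_space X.
Proof.
move=> T1 LS x A HA.
have [[n0 Hn0]|Hno] := pselect (exists n0, forall N, exists m,
    (N <= m)%N /\ A n0 m <> x); last first.
  exists (fun _ => x); split; first exact: cvg_cst.
  move=> n; have : exists N, forall m, (N <= m)%N -> A n m = x.
    apply: contrapT => H; apply: Hno; exists n => N.
    apply: contrapT => H2; apply: H; exists N => m Nm.
    by apply: contrapT => H3; apply: H2; exists m.
  case=> N HN; apply: (@fin_head _ _ _ N) => j /HN ->; by exists 0.
have [sig Hsig] := choice Hn0.
pose e N := A n0 (sig N).
have ex : forall N, e N <> x by move=> N; case: (Hsig N).
have ecv : forall U, open U -> U x -> exists M, forall N, (M <= N)%N -> U (e N).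
  move=> U oU Ux; have [M HM] := ev_open (HA n0) _ oU Ux; exists M => N MN.
  by apply: HM; apply: leq_trans MN (proj1 (Hsig N)).
pose phi (o : option nat) : set X := match o with
  | None => [set x]
  | Some k => [set e (Cantor.of_nat k).1] `|` [set A (Cantor.of_nat k).1 (Cantor.of_nat k).2]
  end.
have lsc : lsc_closed_map omega1_open phi.
  split.
    case=> [k|]; split.
    - by exists (e (Cantor.of_nat k).1); left.
    - by apply: closedU; exact: accessible_closed_set1.
    - by exists x.
    - exact: accessible_closed_set1.
  move=> U oU /= [z [/= -> Ux]].
  have [M0 HM0] := ecv U oU Ux.
  have [g Hg] := choice (fun N => ev_open (HA N) _ oU Ux).
  have [G HG] := boundf g M0.
  exists (G + (G + M0) * (G + M0)) => k hk.
  case E: (Cantor.of_nat k) => [N j].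
  have Ek : k = Cantor.to_nat (N, j) by rewrite -E Cantor.cancel_to_of.
  case: (leqP M0 N) => hN.
    by exists (e N); split; [left|exact: HM0].
  exists (A N j); split; first by right.
  apply: Hg; apply: leq_trans (HG N hN) _; rewrite leqNgt; apply/negP => hj.
  have := to_nat_bound _ _ _ _ hN hj; rewrite -Ek ltnNge hk //.
have [f [fc fs]] := LS phi lsc.
have fN : f None = x by have := fs None.
pose B k := match k with 0 => x | k'.+1 => f (Some k') end.
have Bcv : B @ \oo --> x.
  apply: cvg_from_open => U oU Ux.
  have := fc U oU; rewrite /omega1_open /= fN => /(_ Ux) [m Hm].
  by exists m.+1 => -[//|k] /= hk; apply: Hm.
exists B; split => // n.
have oC : open (~` [set e n]) by apply: closed_openC; exact: accessible_closed_set1.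
have [K HK] := ev_open Bcv _ oC (fun h => ex n (esym h)).
apply: (@fin_head _ _ _ K) => j hj.
pose k := Cantor.to_nat (n, j).
have hk : (K <= k.+1)%N by apply: leq_trans hj _; apply: leq_trans (to_nat_ge n j) _.
have := fs (Some k); rewrite /= /k Cantor.cancel_of_to /= => -[h|h].
  by exfalso; apply: (HK _ hk).
by exists k.+1.
Qed.
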